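(* Let $U\le B$ be positive integers, $P>0$, $\mathbf{H}\in\mathbb{C}^{U\times B}$, and $\mathbf{s}\in\mathbb{C}^U$ with $\mathbf{s}\neq\mathbf{0}$. Set $$\mathbf{Q}=\mathbf{I}_U-\frac{\mathbf{s}\mathbf{s}^H}{\|\mathbf{s}\|_2^2},\qquad \mathbf{A}=\mathbf{Q}\mathbf{H}\in\mathbb{C}^{U\times B},$$ and let $\ell=\sqrt{P/(2B)}$ and $$\mathcal{B}^B=\{\mathbf{c}\in\mathbb{C}^B:\ |\mathrm{Re}\{c_b\}|\le \ell,\ |\mathrm{Im}\{c_b\}|\le \ell,\ b=1,\dots,B\}.$$ Fix parameters $0<\delta<\gamma$. Consider the problem (BCR$^*$) $$\min_{\mathbf{x}\in\mathcal{B}^B,\ \mathbf{z}\in\mathbb{C}^B}\ E(\mathbf{z},\mathbf{x}),\qquad E(\mathbf{z},\mathbf{x})=\|\mathbf{A}\mathbf{z}\|_2^2+\gamma\|\mathbf{z}-\mathbf{x}\|_2^2-\delta\|\mathbf{x}\|_2^2 .$$ Define the sequence (algorithm C1PO) by $\mathbf{x}^{(1)}=\mathbf{H}^H\mathbf{s}$ and, for $t=1,2,\dots$, $$\mathbf{z}^{(t+1)}=(\mathbf{I}_B+\gamma^{-1}\mathbf{A}^H\mathbf{A})^{-1}\mathbf{x}^{(t)},\qquad \mathbf{x}^{(t+1)}=\mathrm{proj}(\mathbf{z}^{(t+1)}),$$ where $\mathrm{proj}$ acts entrywise as $$\mathrm{proj}(z)=\mathrm{sgn}(\mathrm{Re}\{z\})\min\Big\{\tfrac{\gamma}{\gamma-\delta}|\mathrm{Re}\{z\}|,\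 \ell\Big\}+j\,\mathrm{sgn}(\mathrm{Im}\{z\})\min\Big\{\tfrac{\gamma}{\gamma-\delta}|\mathrm{Im}\{z\}|,\ \ell\Big\}.$$ Then any limit point of the sequence $\{(\mathbf{x}^{(t)},\mathbf{z}^{(t)})\}$ is a stationary point of (BCR$^*$).
   Context: $\mathrm{sgn}(a)=+1$ for $a\ge 0$ and $-1$ for $a<0$; $j$ is the imaginary unit. Complex vectors are identified with real vectors of twice the dimension (real and imaginary parts), with real inner product $\mathrm{Re}\{\mathbf{u}^H\mathbf{v}\}$. A stationary point of (BCR$^*$) is a pair $(\mathbf{z}^\star,\mathbf{x}^\star)$ with $\mathbf{x}^\star\in\mathcal{B}^B$ satisfying the first-order optimality conditions: the gradient of $E$ with respect to $\mathbf{z}$ vanishes at $(\mathbf{z}^\star,\mathbf{x}^\star)$, and the negative gradient of $E$ with respect to $\mathbf{x}$ at $(\mathbf{z}^\star,\mathbf{x}^\star)$ lies in the normal cone of the convex set $\mathcal{B}^B$ at $\mathbf{x}^\star$. *)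

(* Defs.v *)
From mathcomp Require Import all_boot all_order all_algebra.
From mathcomp Require Import reals normedtype derive.
From mathcomp Require Export complex.
Set Implicit Arguments. Unset Strict Implicit. Unset Printing Implicit Defensive.
Import Order.TTheory GRing.Theory Num.Theory numFieldNormedType.Exports.
Local Open Scope ring_scope.
Local Open Scope complex_scope.

Section C1PO.
Variable R : realType.
Local Notation C := R[i].

Definition adj m n (M : 'M[C]_(m, n)) : 'M[C]_(n, m) := (map_mx conjc M)^T.

Definition rinner n (u v : 'cV[C]_n) : R := complex.Re ((adj u *m v) 0 0).

Definition sqnorm n (v : 'cV[C]_n) : R := rinner v v.

Definition sgn (a : R) : R := if 0 <= a then 1 else -1.

Definition inbox n (ell : R) (c : 'cV[C]_n) : Prop :=
  forall b : 'I_n, `|complex.Re (c b 0)| <= ell /\ `|complex.Im (c b 0)| <= ell.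

Definition Qmat U (s : 'cV[C]_U) : 'M[C]_U :=
  1%:M - ((sqnorm s)^-1)%:C *: (s *m adj s).

Definition energy U n (A : 'M[C]_(U, n)) (gamma delta : R) (z x : 'cV[C]_n) : R :=
  sqnorm (A *m z) + gamma * sqnorm (z - x) - delta * sqnorm x.

Definition c1po_proj1 (gamma delta ell a : R) : R :=
  sgn a * Num.min (gamma / (gamma - delta) * `|a|) ell.

Definition c1po_projc (gamma delta ell : R) (w : C) : C :=
  (c1po_proj1 gamma delta ell (complex.Re w)) +i* (c1po_proj1 gamma delta ell (complex.Im w)).

Definition c1po_proj n (gamma delta ell : R) (v : 'cV[C]_n) : 'cV[C]_n :=
  \col_(b < n) c1po_projc gamma delta ell (v b 0).

(* g is the gradient of f : C^n -> R at p, C^n viewed as R^{2n} with the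
   real inner product Re{u^H v}: every directional derivative of f at p
   along a real direction v equals <g, v>. *)
Definition is_gradient n (f : 'cV[C]_n -> R) (p g : 'cV[C]_n) : Prop :=
  forall v : 'cV[C]_n,
    is_derive (0 : R) (1 : R) (fun h : R => f (p + h%:C *: v)) (rinner g v).

Definition normal_cone n (S : 'cV[C]_n -> Prop) (x g : 'cV[C]_n) : Prop :=
  forall y, S y -> rinner g (y - x) <= 0.

Definition stationary U n (A : 'M[C]_(U, n)) (gamma delta ell : R)
    (zs xs : 'cV[C]_n) : Prop :=
  inbox ell xs /\
  (exists gz, is_gradient (fun z => energy A gamma delta z xs) zs gz /\ gz = 0) /\
  (exists gx, is_gradient (fun x => energy A gamma delta zs x) xs gx /\
              normal_cone (inbox ell) xs (- gx)).

Definition limit_point n (x z : nat -> 'cV[C]_n) (xs zs : 'cV[C]_n) : Prop :=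
  forall eps : R, 0 < eps -> forall N : nat, exists t : nat,
    (N <= t)%N /\ sqnorm (x t - xs) + sqnorm (z t - zs) < eps.

End C1PO.

(* Main.v *)
Require Import Defs.
From mathcomp Require Import all_boot all_order all_algebra.
From mathcomp Require Import reals normedtype derive.
From mathcomp Require Import complex.
From mathcomp Require Import ring lra.
Set Warnings "-notation-overridden,-ambiguous-paths".
Import Order.TTheory GRing.Theory Num.Theory numFieldNormedType.Exports.
Local Open Scope ring_scope.
Local Open Scope complex_scope.
From mathcomp Require Import classical_sets boolp zify.

Section S.
Variable R : realType.
Lemma min_cases (x y : R) : (Num.min x y = x /\ x <= y) \/ (Num.min x y = y /\ y <= x).
Proof. rewrite minElt; case: ltP => h; [left|right]; split=> //; exact: ltW. Qed.

Lemma proj1_cases (g d l a : R) : 0 < d -> d < g -> 0 <= l ->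
  let k := g / (g - d) * a in let p := c1po_proj1 g d l a in
  (p = k /\ - l <= k <= l) \/ (p = l /\ l <= k) \/ (p = - l /\ k <= - l).
Proof.
move=> d0 dg l0 k p.
have c0 : 0 < g / (g - d) by apply: divr_gt0; lra.
rewrite /p /c1po_proj1 /sgn /k.
case: ifP => a0.
- rewrite (ger0_norm a0) mul1r.
  have ka : 0 <= g / (g - d) * a by apply: mulr_ge0; lra.
  case: (min_cases (g / (g - d) * a) l) => [[-> h]|[-> h]].
  + by left; split=> //; apply/andP; split=> //; lra.
  + by right; left.
- have an : a < 0 by rewrite ltNge a0.
  rewrite (ltr0_norm an) mulrN mulN1r.
  have ka : g / (g - d) * a < 0 by rewrite pmulr_rlt0.
  case: (min_cases (- (g / (g - d) * a)) l) => [[-> h]|[-> h]].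
  + rewrite opprK; left; split=> //; apply/andP; split; lra.
  + right; right; split=> //; lra.
Qed.

Lemma proj1_bound (g d l a : R) : 0 < d -> d < g -> 0 <= l ->
  `|c1po_proj1 g d l a| <= l.
Proof.
move=> d0 dg l0; rewrite ler_norml.
case: (proj1_cases g d l a d0 dg l0) => /= [[-> /andP[]]|[[-> h]|[-> h]]]; lra.
Qed.

Lemma proj1_opt (g d l a q : R) : 0 < d -> d < g -> 0 <= l -> `|q| <= l ->
  0 <= (2 * g * (c1po_proj1 g d l a - a) - 2 * d * c1po_proj1 g d l a) * (q - c1po_proj1 g d l a).
Proof.
set p := c1po_proj1 g d l a.
move=> d0 dg l0 hq; move: hq; rewrite ler_norml => /andP[q1 q2].
have gd : 0 < g - d by lra.
have E : g / (g - d) * a * (g - d) = g * a by rewrite mulrAC divfK //; lra.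
case: (proj1_cases g d l a d0 dg l0) => /= [|[|]]; rewrite -/p.
- move=> [-> _]. have -> : 2 * g * (g / (g - d) * a - a) - 2 * d * (g / (g - d) * a)
     = 2 * (g / (g - d) * a * (g - d) - g * a) by ring.
  by rewrite E subrr mulr0 mul0r.
- move=> [-> h]. have h2 : l * (g - d) <= g * a.
    by rewrite -E ler_pM2r.
  nra.
- move=> [-> h]. have h2 : g * a <= - l * (g - d).
    by rewrite -E ler_pM2r.
  nra.
Qed.

Lemma proj1_lip (g d l a b : R) : 0 < d -> d < g -> 0 <= l ->
  (c1po_proj1 g d l a - c1po_proj1 g d l b) ^+ 2 <= (g / (g - d)) ^+ 2 * (a - b) ^+ 2.
Proof.
move=> d0 dg l0.
have -> : (g / (g - d)) ^+ 2 * (a - b) ^+ 2 = (g / (g - d) * a - g / (g - d) * b) ^+ 2 by ring.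
set X := c1po_proj1 g d l a - c1po_proj1 g d l b.
set Y := g / (g - d) * a - g / (g - d) * b.
suff : (0 <= X /\ X <= Y) \/ (Y <= X /\ X <= 0) by case=> [[h1 h2]|[h1 h2]]; nra.
rewrite /X /Y.
case: (proj1_cases g d l a d0 dg l0) => /= [[-> /andP[h1 h2]]|[[-> h1]|[-> h1]]];
case: (proj1_cases g d l b d0 dg l0) => /= [[-> /andP[k1 k2]]|[[-> k1]|[-> k1]]];
  (have [hh|hh] := lerP (g / (g - d) * b) (g / (g - d) * a); [left|right]); split; lra.
Qed.
End S.

Lemma quad_derive (R : realType) (a b c : R) :
  is_derive (0 : R) (1 : R) (fun h : R => a + h * b + h ^+ 2 * c) b.
Proof.
set p : {poly R} := a%:P + b *: 'X + c *: 'X^2.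
have -> : (fun h : R => a + h * b + h ^+ 2 * c) = horner p.
  apply/funext => h; rewrite /p !hornerD hornerC !hornerZ hornerX hornerXn; ring.
apply: is_derive_eq.
rewrite /p !derivD derivC !derivZ derivX derivXn.
by rewrite !hornerE /=.
Qed.

Set Implicit Arguments. Unset Strict Implicit.
Section V.
Variable R : realType.
Local Notation C := R[i].
Implicit Types (n : nat).
Lemma ReMJ (a b : C) : complex.Re (a^* * b) = complex.Re a * complex.Re b + complex.Im a * complex.Im b.
Proof. case: a => a1 a2; case: b => b1 b2. simpc. rewrite /=. ring. Qed.
Lemma ReD (a b : C) : complex.Re (a + b) = complex.Re a + complex.Re b.
Proof. by case: a => a1 a2; case: b => b1 b2. Qed.
Lemma ImD (a b : C) : complex.Im (a + b) = complex.Im a + complex.Im b.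
Proof. by case: a => a1 a2; case: b => b1 b2. Qed.
Lemma ReN (a : C) : complex.Re (- a) = - complex.Re a.
Proof. by case: a. Qed.
Lemma ImN (a : C) : complex.Im (- a) = - complex.Im a.
Proof. by case: a. Qed.
Lemma ReZ (c : R) (a : C) : complex.Re (c%:C * a) = c * complex.Re a.
Proof. case: a => a1 a2. simpc. rewrite /=. ring. Qed.
Lemma ImZ (c : R) (a : C) : complex.Im (c%:C * a) = c * complex.Im a.
Proof. case: a => a1 a2. simpc. rewrite /=. ring. Qed.
Lemma Re_sum n (F : 'I_n -> C) : complex.Re (\sum_i F i) = \sum_i complex.Re (F i).
Proof. elim/big_rec2: _ => // i y1 y2 _ <-. by rewrite ReD. Qed.
Lemma rinnerE n (u v : 'cV[C]_n) : rinner u v = \sum_i (complex.Re (u i 0) * complex.Re (v i 0) + complex.Im (u i 0) * complex.Im (v i 0)).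
Proof.
rewrite /rinner !mxE Re_sum; apply: eq_bigr => i _.
by rewrite /adj !mxE ReMJ.
Qed.
Lemma sqnormE n (u : 'cV[C]_n) : sqnorm u = \sum_i (complex.Re (u i 0) ^+ 2 + complex.Im (u i 0) ^+ 2).
Proof. by rewrite /sqnorm rinnerE; apply: eq_bigr => i _; rewrite !expr2. Qed.

Lemma rinnerC n (u v : 'cV[C]_n) : rinner u v = rinner v u.
Proof. rewrite !rinnerE; apply: eq_bigr => i _; ring. Qed.
Lemma rinnerDl n (u v w : 'cV[C]_n) : rinner (u + v) w = rinner u w + rinner v w.
Proof. rewrite !rinnerE -big_split; apply: eq_bigr => i _ /=; rewrite !mxE ReD ImD; ring. Qed.
Lemma rinnerNl n (u w : 'cV[C]_n) : rinner (- u) w = - rinner u w.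
Proof. rewrite !rinnerE -sumrN; apply: eq_bigr => i _ /=; rewrite !mxE ReN ImN; ring. Qed.
Lemma rinnerZl n (c : R) (u w : 'cV[C]_n) : rinner (c%:C *: u) w = c * rinner u w.
Proof. rewrite !rinnerE mulr_sumr; apply: eq_bigr => i _ /=; rewrite !mxE ReZ ImZ; ring. Qed.
Lemma rinnerBl n (u v w : 'cV[C]_n) : rinner (u - v) w = rinner u w - rinner v w.
Proof. by rewrite rinnerDl rinnerNl. Qed.
Lemma rinnerDr n (u v w : 'cV[C]_n) : rinner w (u + v) = rinner w u + rinner w v.
Proof. by rewrite rinnerC rinnerDl !(rinnerC w). Qed.
Lemma rinnerNr n (u w : 'cV[C]_n) : rinner w (- u) = - rinner w u.
Proof. by rewrite rinnerC rinnerNl rinnerC. Qed.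
Lemma rinnerBr n (u v w : 'cV[C]_n) : rinner w (u - v) = rinner w u - rinner w v.
Proof. by rewrite rinnerDr rinnerNr. Qed.
Lemma rinnerZr n (c : R) (u w : 'cV[C]_n) : rinner w (c%:C *: u) = c * rinner w u.
Proof. by rewrite rinnerC rinnerZl rinnerC. Qed.
Lemma rinner0l n (w : 'cV[C]_n) : rinner 0 w = 0.
Proof. rewrite rinnerE big1 // => i _; rewrite mxE /=; ring. Qed.

Lemma sqnorm_ge0 n (u : 'cV[C]_n) : 0 <= sqnorm u.
Proof. rewrite sqnormE; apply: sumr_ge0 => i _; apply: addr_ge0; exact: sqr_ge0. Qed.
Lemma sqnorm_eq0 n (u : 'cV[C]_n) : sqnorm u = 0 -> u = 0.
Proof.
rewrite sqnormE => /eqP; rewrite psumr_eq0; last by move=> i _; apply: addr_ge0; exact: sqr_ge0.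
move=> /allP h; apply/matrixP => i j; rewrite !mxE (ord1 j).
have := h i (mem_index_enum i) => /implyP /(_ isT) /eqP e.
have h1 : complex.Re (u i 0) = 0 by apply/eqP; rewrite -sqrf_eq0; apply/eqP; nra.
have h2 : complex.Im (u i 0) = 0 by apply/eqP; rewrite -sqrf_eq0; apply/eqP; nra.
by case: (u i 0) h1 h2 => /= a b -> ->.
Qed.

Lemma sqnormD n (u v : 'cV[C]_n) : sqnorm (u + v) = sqnorm u + 2 * rinner u v + sqnorm v.
Proof. rewrite /sqnorm rinnerDl !rinnerDr (rinnerC v u); ring. Qed.
Lemma sqnormN n (u : 'cV[C]_n) : sqnorm (- u) = sqnorm u.
Proof. rewrite /sqnorm rinnerNl rinnerNr; ring. Qed.
Lemma sqnormB n (u v : 'cV[C]_n) : sqnorm (u - v) = sqnorm u - 2 * rinner u v + sqnorm v.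
Proof. rewrite sqnormD sqnormN rinnerNr; ring. Qed.
Lemma sqnormZ n (c : R) (u : 'cV[C]_n) : sqnorm (c%:C *: u) = c ^+ 2 * sqnorm u.
Proof. rewrite /sqnorm rinnerZl rinnerZr; ring. Qed.
Lemma sqnorm_swap n (u v : 'cV[C]_n) : sqnorm (u - v) = sqnorm (v - u).
Proof. by rewrite -sqnormN opprB. Qed.
Lemma sqnormD_le n (u v : 'cV[C]_n) : sqnorm (u + v) <= 2 * sqnorm u + 2 * sqnorm v.
Proof.
have := sqnorm_ge0 (u - v); rewrite sqnormB sqnormD => h; lra.
Qed.

Lemma adjM m n p (M : 'M[C]_(m, n)) (N : 'M[C]_(n, p)) : adj (M *m N) = adj N *m adj M.
Proof. by rewrite /adj map_mxM trmx_mul. Qed.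
Lemma adjK m n (M : 'M[C]_(m, n)) : adj (adj M) = M.
Proof. by apply/matrixP => i j; rewrite /adj !mxE conjcK. Qed.
Lemma rinner_adj m n (M : 'M[C]_(m, n)) (u : 'cV[C]_m) (v : 'cV[C]_n) :
  rinner (adj M *m u) v = rinner u (M *m v).
Proof. by rewrite /rinner adjM adjK mulmxA. Qed.
End V.

Section M.
Variable R : realType.
Local Notation C := R[i].
Variables (U n : nat) (A : 'M[C]_(U, n)) (g : R).
Hypothesis g0 : 0 < g.
Let M : 'M[C]_n := 1%:M + ((g^-1)%R)%:C *: (adj A *m A).

Lemma adj0 m p : adj (0 : 'M[C]_(m, p)) = 0.
Proof. by apply/matrixP => i j; rewrite /adj !mxE conjc0. Qed.
Lemma adjD m p (X Y : 'M[C]_(m, p)) : adj (X + Y) = adj X + adj Y.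
Proof. by apply/matrixP => i j; rewrite /adj !mxE rmorphD. Qed.
Lemma adjZ m p (c : R) (X : 'M[C]_(m, p)) : adj (c%:C *: X) = c%:C *: adj X.
Proof. apply/matrixP => i j; rewrite /adj !mxE; case: (X j i) => a b; simpc. by []. Qed.
Lemma adj1 : adj (1%:M : 'M[C]_n) = 1%:M.
Proof. apply/matrixP => i j; rewrite /adj !mxE eq_sym; case: (i == j); [exact: conjc1 | exact: conjc0]. Qed.
Lemma Mmul (u : 'cV[C]_n) : M *m u = u + ((g^-1)%R)%:C *: (adj A *m (A *m u)).
Proof. by rewrite /M mulmxDl mul1mx -scalemxAl mulmxA. Qed.

Lemma rinner_M (u : 'cV[C]_n) : rinner u (M *m u) = sqnorm u + g^-1 * sqnorm (A *m u).
Proof. by rewrite Mmul rinnerDr rinnerZr rinnerC rinner_adj. Qed.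

Lemma adjMM : adj M = M.
Proof. by rewrite /M adjD adj1 adjZ adjM adjK. Qed.

Lemma M_unit : M \in unitmx.
Proof.
rewrite unitmxE unitfE; apply/negP => /det0P [v v0 vM].
have h : M *m adj v = 0 by rewrite -adjMM -adjM vM adj0.
have := rinner_M (adj v); rewrite h.
have := sqnorm_ge0 (A *m adj v); have := sqnorm_ge0 (adj v).
have gi : 0 < g^-1 by rewrite invr_gt0.
rewrite /rinner mulmx0 mxE /= => h1 h2 e.
have : sqnorm (adj v) = 0 by nra.
move/sqnorm_eq0 => e2; move: v0; by rewrite -(adjK v) e2 adj0 eqxx.
Qed.

Lemma M_inv (x : 'cV[C]_n) : M *m (invmx M *m x) = x.
Proof. by rewrite mulmxA mulmxV ?mul1mx // M_unit. Qed.

Lemma key_id (z x : 'cV[C]_n) : M *m z = x -> forall w, rinner (A *m z) (A *m w) + g * rinner (z - x) w = 0.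
Proof.
move=> hz w; rewrite -hz Mmul opprD addrA subrr add0r rinnerNl rinnerZl -rinner_adj.
have gn : g != 0 by rewrite gt_eqF.
rewrite mulrN mulrA mulfV // mul1r; ring.
Qed.

Lemma M_contr (w : 'cV[C]_n) : sqnorm (invmx M *m w) <= sqnorm w.
Proof.
set u := invmx M *m w.
have -> : w = M *m u by rewrite M_inv.
rewrite Mmul sqnormD sqnormZ rinnerZr rinnerC rinner_adj.
have := sqnorm_ge0 (A *m u); have := sqnorm_ge0 (adj A *m (A *m u)).
have gi : 0 < g^-1 by rewrite invr_gt0.
nra.
Qed.

Lemma z_opt (d : R) (z x z' : 'cV[C]_n) : M *m z = x -> energy A g d z x <= energy A g d z' x.
Proof.
move=> hz.
suff H : forall w, energy A g d z x <= energy A g d (z + w) x.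
  by have := H (z' - z); rewrite addrC subrK.
move=> w; have K := key_id hz w.
rewrite /energy mulmxDr (sqnormD (A *m z)).
have -> : z + w - x = (z - x) + w by rewrite addrAC.
rewrite (sqnormD (z - x)).
have := sqnorm_ge0 (A *m w); have := mulr_ge0 (ltW g0) (sqnorm_ge0 w).
lra.
Qed.
End M.

Section P.
Variable R : realType.
Local Notation C := R[i].
Variables (n : nat) (g d l : R).
Hypotheses (d0 : 0 < d) (dg : d < g) (l0 : 0 <= l).
Local Notation proj := (c1po_proj g d l).
Definition Gv (z p : 'cV[C]_n) := (2 * g)%:C *: (p - z) - (2 * d)%:C *: p.

Lemma proj_entry (z : 'cV[C]_n) i :
  complex.Re (proj z i 0) = c1po_proj1 g d l (complex.Re (z i 0)) /\
  complex.Im (proj z i 0) = c1po_proj1 g d l (complex.Im (z i 0)).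
Proof. by rewrite /c1po_proj mxE. Qed.

Lemma proj_inbox (z : 'cV[C]_n) : inbox l (proj z).
Proof. move=> i; have [-> ->] := proj_entry z i; split; exact: proj1_bound. Qed.

Lemma NC (z y : 'cV[C]_n) : inbox l y -> 0 <= rinner (Gv z (proj z)) (y - proj z).
Proof.
move=> hy; rewrite rinnerE; apply: sumr_ge0 => i _.
rewrite !mxE !(ReD, ImD, ReN, ImN, ReZ, ImZ).
have [e1 e2] := proj_entry z i.
rewrite /c1po_proj mxE /= in e1 e2 *.
have [h1 h2] := hy i.
apply: addr_ge0.
- exact: proj1_opt.
- exact: proj1_opt.
Qed.

Lemma x_opt U (A : 'M[C]_(U, n)) (z y : 'cV[C]_n) : inbox l y ->
  energy A g d z (proj z) + (g - d) * sqnorm (y - proj z) <= energy A g d z y.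
Proof.
move=> hy; have := NC z hy.
set p := proj z; set w := y - p.
have -> : y = p + w by rewrite /w addrC subrK.
rewrite /energy /Gv.
have -> : z - (p + w) = (z - p) - w by rewrite opprD addrA.
rewrite (sqnormB (z - p)) (sqnormD p) !rinnerBl !rinnerZl (rinnerBl p z).
lra.
Qed.

Lemma proj_lip (u v : 'cV[C]_n) : sqnorm (proj u - proj v) <= (g / (g - d)) ^+ 2 * sqnorm (u - v).
Proof.
rewrite !sqnormE mulr_sumr; apply: ler_sum => i _.
rewrite !mxE !(ReD, ImD, ReN, ImN) /= mulrDr.
apply: lerD; exact: proj1_lip.
Qed.

Lemma inbox_bound (x : 'cV[C]_n) : inbox l x -> sqnorm x <= \sum_(i < n) (l ^+ 2 + l ^+ 2).
Proof.
move=> hx; rewrite sqnormE; apply: ler_sum => i _.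
have [h1 h2] := hx i; move: h1 h2; rewrite !ler_norml => /andP[h1 h1'] /andP[h2 h2'].
apply: lerD; nra.
Qed.
End P.

Section G.
Variable R : realType.
Local Notation C := R[i].
Variables (U n : nat) (A : 'M[C]_(U, n)) (g d : R).

Lemma grad_z (z x v : 'cV[C]_n) :
  is_derive (0 : R) (1 : R) (fun h : R => energy A g d (z + h%:C *: v) x)
    (2 * rinner (A *m z) (A *m v) + 2 * g * rinner (z - x) v).
Proof.
have -> : (fun h : R => energy A g d (z + h%:C *: v) x) =
  (fun h : R => (sqnorm (A *m z) + g * sqnorm (z - x) - d * sqnorm x) +
     h * (2 * rinner (A *m z) (A *m v) + 2 * g * rinner (z - x) v) +
     h ^+ 2 * (sqnorm (A *m v) + g * sqnorm v)).
  apply/funext => h; rewrite /energy mulmxDr -scalemxAr.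
  have -> : z + h%:C *: v - x = (z - x) + h%:C *: v by rewrite addrAC.
  rewrite !sqnormD !sqnormZ !rinnerZr; ring.
exact: quad_derive.
Qed.

Lemma grad_x (z x v : 'cV[C]_n) :
  is_derive (0 : R) (1 : R) (fun h : R => energy A g d z (x + h%:C *: v))
    (- 2 * g * rinner (z - x) v - 2 * d * rinner x v).
Proof.
have -> : (fun h : R => energy A g d z (x + h%:C *: v)) =
  (fun h : R => (sqnorm (A *m z) + g * sqnorm (z - x) - d * sqnorm x) +
     h * (- 2 * g * rinner (z - x) v - 2 * d * rinner x v) +
     h ^+ 2 * (g * sqnorm v - d * sqnorm v)).
  apply/funext => h; rewrite /energy.
  have -> : z - (x + h%:C *: v) = (z - x) - h%:C *: v by rewrite opprD addrA.
  rewrite (sqnormB (z - x)) (sqnormD x) !sqnormZ !rinnerZr; ring.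
exact: quad_derive.
Qed.
End G.

Unset Implicit Arguments.
Lemma nat1 {t T : nat} : (T + 3 <= t)%N -> (3 <= t)%N /\ (0 < t)%N /\ (T <= t.-1)%N.
Proof. lia. Qed.
Lemma nat2 {t : nat} : (3 <= t)%N -> (1 <= t.-1)%N /\ (0 < t)%N.
Proof. lia. Qed.

Lemma small0 (R : realType) (a K : R) : 0 < K -> 0 <= a ->
  (forall eps, 0 < eps -> a < K * eps) -> a = 0.
Proof.
move=> K0 a0 h; apply/eqP; rewrite eq_le a0 andbT; rewrite leNgt; apply/negP => ap.
have := h (a / K) (divr_gt0 ap K0).
rewrite mulrC divfK ?ltxx //; by rewrite gt_eqF.
Qed.

Lemma comb10 (R : realType) (S a T u' w' u w eps : R) : S <= 2*a + 2*T -> T <= 2*u' + 2*w' -> u' <= u -> w' <= w -> a < eps -> u < eps -> w < eps -> S < 10 * eps.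
Proof. lra. Qed.

Lemma combP (R : realType) (S a T c2 b eps : R) : S <= 2*a + 2*T -> T <= c2 * b -> a < eps -> b < eps -> 0 <= b ->
  0 <= c2 -> S < (2 + 2 * c2) * eps.
Proof. move=> h1 h2 h3 h4 h5 h6; have : c2 * b <= c2 * eps by apply: ler_wpM2l => //; lra. nra. Qed.

Lemma final (R : realType) U B (A : 'M[R[i]]_(U, B)) (gamma delta ell : R) (xs zs : 'cV[R[i]]_B) :
  0 < delta -> delta < gamma -> 0 <= ell ->
  (1%:M + ((gamma^-1)%R)%:C *: (adj A *m A)) *m zs = xs ->
  xs = c1po_proj gamma delta ell zs ->
  stationary A gamma delta ell zs xs.
Proof.
move=> d0 dg l0 zsE xsE.
have g0 : 0 < gamma by lra.
split; first by rewrite xsE; exact: proj_inbox.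
split.
  exists 0; split => // v.
  have := grad_z A gamma delta zs xs v.
  have := key_id g0 zsE v.
  rewrite rinner0l => K D; apply: is_derive_eq D _; lra.
exists (Gv gamma delta zs xs); split.
  move=> v; apply: is_derive_eq (grad_x A gamma delta zs xs v) _.
  rewrite /Gv !rinnerBl !rinnerZl !rinnerBl; ring.
move=> y hy; rewrite rinnerNl.
have := NC d0 dg l0 zs hy; rewrite -xsE; lra.
Qed.

Theorem theorem1 (R : realType) (U B : nat) (P gamma delta : R)
    (H : 'M[R[i]]_(U, B)) (s : 'cV[R[i]]_U)
    (x z : nat -> 'cV[R[i]]_B) (xs zs : 'cV[R[i]]_B) :
  (0 < U)%N -> (U <= B)%N -> 0 < P -> s != 0 ->
  0 < delta -> delta < gamma ->
  let A := Qmat s *m H in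
  let ell := Num.sqrt (P / (2 * B%:R)) in
  x 1%N = adj H *m s ->
  (forall t : nat, (1 <= t)%N ->
     z t.+1 = invmx (1%:M + ((gamma^-1)%R)%:C *: (adj A *m A)) *m x t /\
     x t.+1 = c1po_proj gamma delta ell (z t.+1)) ->
  limit_point x z xs zs ->
  stationary A gamma delta ell zs xs.
Proof.
move=> U0 UB P0 s0 d0 dg A ell hx1 hrec hlim.
set M := 1%:M + ((gamma^-1)%R)%:C *: (adj A *m A).
have g0 : 0 < gamma by lra.
have gd : 0 < gamma - delta by lra.
have l0 : 0 <= ell by apply: sqrtr_ge0.
have Mz : forall t, (1 <= t)%N -> M *m z t.+1 = x t.
  by move=> t ht; rewrite (proj1 (hrec t ht)); exact: M_inv.
have xp : forall t, (1 <= t)%N -> x t.+1 = c1po_proj gamma delta ell (z t.+1).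
  by move=> t ht; rewrite (proj2 (hrec t ht)).
have xb : forall t, (2 <= t)%N -> inbox ell (x t).
  case=> // t ht; rewrite xp //; exact: proj_inbox.
set e := fun t => energy A gamma delta (z t) (x t).
have dec : forall t, (2 <= t)%N -> e t.+1 + (gamma - delta) * sqnorm (x t - x t.+1) <= e t.
  move=> t ht.
  have h1 := z_opt g0 delta (z t) (Mz t (ltnW ht)).
  have h2 := x_opt d0 dg l0 A (z t.+1) (xb t ht).
  rewrite -xp ?(ltnW ht) // in h2.
  rewrite /e; lra.
set L := - delta * \sum_(i < B) (ell ^+ 2 + ell ^+ 2).
have lb : forall t, (2 <= t)%N -> L <= e t.
  move=> t ht; have := inbox_bound (xb t ht).
  have := sqnorm_ge0 (A *m z t); have := mulr_ge0 (ltW g0) (sqnorm_ge0 (z t - x t)).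
  rewrite /e /energy /L; nra.
have mono : forall t k, (2 <= t)%N -> e (t + k)%N <= e t.
  move=> t k ht; elim: k => [|k ih]; first by rewrite addn0.
  rewrite addnS; have := dec (t + k)%N (leq_trans ht (leq_addr _ _)).
  have := mulr_ge0 (ltW gd) (sqnorm_ge0 (x (t + k)%N - x (t + k).+1)); lra.
have small : forall eps, 0 < eps -> exists T, forall t, (T <= t)%N -> sqnorm (x t - x t.+1) < eps.
  move=> eps e0.
  pose S : set R := fun r => exists2 t, (2 <= t)%N & r = e t.
  have hS : has_inf S.
    split; first by exists (e 2%N), 2%N.
    by exists L => r [t ht ->]; exact: lb.
  have [r [t0 ht0 ->] hr] := inf_adherent (mulr_gt0 gd e0) hS.
  exists t0 => t htt.
  have hinf : inf S <= e t.+1.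
    apply: (ge_inf hS.2); exists t.+1 => //.
    exact: leq_trans ht0 (leq_trans htt (leqnSn _)).
  have ht2 : (2 <= t)%N by exact: leq_trans ht0 htt.
  have hm : e t <= e t0 by rewrite -(subnKC htt); exact: mono.
  have := dec t ht2.
  move=> hd.
  have : (gamma - delta) * sqnorm (x t - x t.+1) < (gamma - delta) * eps by lra.
  by rewrite ltr_pM2l.
have approx : forall eps, 0 < eps -> exists t, [/\ (3 <= t)%N, sqnorm (x t - xs) < eps,
    sqnorm (z t - zs) < eps & sqnorm (x t.-1 - x t) < eps].
  move=> eps e0; have [T hT] := small eps e0.
  have [t [ht hl]] := hlim eps e0 (T + 3)%N.
  have h1 := sqnorm_ge0 (x t - xs); have h2 := sqnorm_ge0 (z t - zs).
  exists t; split.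
  - by case: (nat1 ht).
  - lra.
  - lra.
  - have [_ [ht1 ht2]] := nat1 ht.
    by have := hT t.-1 ht2; rewrite prednK.
have zsE : M *m zs = xs.
  suff -> : zs = invmx M *m xs by exact: M_inv.
  apply/eqP; rewrite -subr_eq0; apply/eqP; apply: sqnorm_eq0.
  apply: (@small0 R _ 10) => //; first exact: sqnorm_ge0.
  move=> eps e0; have [t [ht h1 h2 h3]] := approx eps e0.
  have [ht1 ht0] := nat2 ht.
  have zt : z t = invmx M *m x t.-1.
    by have := proj1 (hrec t.-1 ht1); rewrite prednK.
  have -> : zs - invmx M *m xs = - (z t - zs) + (invmx M *m (x t.-1 - x t) + invmx M *m (x t - xs)).
    by rewrite zt !mulmxBr (addrA (_ - _)) subrK opprB addrA subrK.
  have k1 := sqnormD_le (- (z t - zs)) (invmx M *m (x t.-1 - x t) + invmx M *m (x t - xs)).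
  have k2 := sqnormD_le (invmx M *m (x t.-1 - x t)) (invmx M *m (x t - xs)).
  have k3 := M_contr A g0 (x t.-1 - x t).
  have k4 := M_contr A g0 (x t - xs).
  rewrite sqnormN in k1.
  exact: comb10 k1 k2 k3 k4 h2 h3 h1.
have xsE : xs = c1po_proj gamma delta ell zs.
  apply/eqP; rewrite -subr_eq0; apply/eqP; apply: sqnorm_eq0.
  apply: (@small0 R _ (2 + 2 * (gamma / (gamma - delta)) ^+ 2)).
    have := sqr_ge0 (gamma / (gamma - delta)); move: (_ ^+ 2) => q; lra.
    exact: sqnorm_ge0.
  move=> eps e0; have [t [ht h1 h2 h3]] := approx eps e0.
  have xt : x t = c1po_proj gamma delta ell (z t).
    by have [ht1 ht0] := nat2 ht; have := xp t.-1 ht1; rewrite prednK.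
  have -> : xs - c1po_proj gamma delta ell zs =
      - (x t - xs) + (c1po_proj gamma delta ell (z t) - c1po_proj gamma delta ell zs).
    by rewrite -xt opprB addrA subrK.
  have k1 := sqnormD_le (- (x t - xs)) (c1po_proj gamma delta ell (z t) - c1po_proj gamma delta ell zs).
  have k2 := proj_lip d0 dg l0 (z t) zs.
  rewrite (sqnormN (x t - xs)) in k1.
  exact: combP k1 k2 h1 h2 (sqnorm_ge0 _) (sqr_ge0 _).
exact: (@final R U B A gamma delta ell xs zs d0 dg l0 zsE xsE).
Qed.
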